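(* Let $\epsilon>0$ be sufficiently small. For $\chi\in[0,\pi]$, $\psi\in[-\pi/2,\pi/2]$ set $A_0=e^{i\chi\sigma_z}$, $a_0=i\sigma_x\cos\psi+i\sigma_z\sin\psi$, $c=A_0a_0A_0^{-1}$, and let $$Q(\chi,\psi)=\big[(\,a_0,\ a_0^{-1}c\,a_0A_0,\ a_0^{-1}c\,a_0,\ c\,a_0^{-1}c^{-1}\,)\big]\in R(T^2,2).$$ If $Q(\chi,\psi)=L_s(\phi,\theta)$ for some spherical-polar coordinates $(\phi,\theta)$, then $\chi=\pi/2$, and either $\theta\in\{\pi/2,3\pi/2\}$ or $\phi\in\{0,\pi\}$.
   Context: Pauli matrices standard; $[A,B]=ABA^{-1}B^{-1}$. $R(T^2,2)$ is the space of tuples $(A,B,a,b)\in SU(2)^4$ with $\operatorname{tr}a=\operatorname{tr}b=0$ and $[A,B]ab=1$ modulo simultaneous conjugation (the tuple defining $Q$ satisfies these conditions). For $\nu=\epsilon\sin\phi$, $L_s(\phi,\theta)=[(A,B,a,b)]$ with $a=i\sigma_z$, $h=(\cos^2\nu+\sin^2\nu\sin^2\theta)^{-1/2}(i\sigma_x\cos\nu-i\sigma_z\sin\nu\sin\theta)$, $A=h(\cos\phi+i\sin\phi(\sigma_x\cos\theta+\sigma_y\sin\theta))$, $B=\cos\nu+i\sin\nu(\sigma_x\cos\theta+\sigma_y\sin\theta)$, $b=-ha^{-1}h^{-1}$. ($Q(\chi,\psi)$ is the image of the disk Lagrangian point $[(e^{i\chi\sigma_z},1,a_0,a_0^{-1})]$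 under the mapping class $s\beta_1\alpha_1^{-1}$ of the twice-punctured torus that produces the trefoil in $S^3$.) *)

(* Defs.v *)
From Stdlib Require Import Reals.
Open Scope R_scope.

Record C := mkC { re : R ; im : R }.
Definition RtoC (x : R) : C := mkC x 0.
Definition C0 : C := mkC 0 0.
Definition C1 : C := mkC 1 0.
Definition Ci : C := mkC 0 1.
Definition Cadd (z w : C) : C := mkC (re z + re w) (im z + im w).
Definition Cneg (z : C) : C := mkC (- re z) (- im z).
Definition Cmul (z w : C) : C :=
  mkC (re z * re w - im z * im w) (re z * im w + im z * re w).
Definition Cconj (z : C) : C := mkC (re z) (- im z).
Definition Cinv (z : C) : C :=
  mkC (re z / (re z ^ 2 + im z ^ 2)) (- im z / (re z ^ 2 + im z ^ 2)).

Record M2 := mkM { m11 : C ; m12 : C ; m21 : C ; m22 : C }.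
Definition Mid : M2 := mkM C1 C0 C0 C1.
Definition Madd (A B : M2) : M2 :=
  mkM (Cadd (m11 A) (m11 B)) (Cadd (m12 A) (m12 B))
      (Cadd (m21 A) (m21 B)) (Cadd (m22 A) (m22 B)).
Definition Mscale (c : C) (A : M2) : M2 :=
  mkM (Cmul c (m11 A)) (Cmul c (m12 A)) (Cmul c (m21 A)) (Cmul c (m22 A)).
Definition Mmul (A B : M2) : M2 :=
  mkM (Cadd (Cmul (m11 A) (m11 B)) (Cmul (m12 A) (m21 B)))
      (Cadd (Cmul (m11 A) (m12 B)) (Cmul (m12 A) (m22 B)))
      (Cadd (Cmul (m21 A) (m11 B)) (Cmul (m22 A) (m21 B)))
      (Cadd (Cmul (m21 A) (m12 B)) (Cmul (m22 A) (m22 B))).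
Definition Mdet (A : M2) : C :=
  Cadd (Cmul (m11 A) (m22 A)) (Cneg (Cmul (m12 A) (m21 A))).
Definition Mtr (A : M2) : C := Cadd (m11 A) (m22 A).
Definition Madj (A : M2) : M2 :=
  mkM (Cconj (m11 A)) (Cconj (m21 A)) (Cconj (m12 A)) (Cconj (m22 A)).
Definition Minv (A : M2) : M2 :=
  Mscale (Cinv (Mdet A)) (mkM (m22 A) (Cneg (m12 A)) (Cneg (m21 A)) (m11 A)).

Definition SU2 (A : M2) : Prop := Mmul (Madj A) A = Mid /\ Mdet A = C1.

Definition sx : M2 := mkM C0 C1 C1 C0.
Definition sy : M2 := mkM C0 (Cneg Ci) Ci C0.
Definition sz : M2 := mkM C1 C0 C0 (Cneg C1).

Definition qmat (a b c d : R) : M2 :=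
  Madd (Mscale (RtoC a) Mid)
       (Mscale Ci (Madd (Mscale (RtoC b) sx)
                        (Madd (Mscale (RtoC c) sy) (Mscale (RtoC d) sz)))).

Definition comm (A B : M2) : M2 := Mmul (Mmul (Mmul A B) (Minv A)) (Minv B).

Record tuple4 := mkT { tA : M2 ; tB : M2 ; ta : M2 ; tb : M2 }.

(** Points of R(T^2,2) (before taking the quotient) *)
Definition in_RT2_2 (t : tuple4) : Prop :=
  SU2 (tA t) /\ SU2 (tB t) /\ SU2 (ta t) /\ SU2 (tb t) /\
  Mtr (ta t) = C0 /\ Mtr (tb t) = C0 /\
  Mmul (Mmul (comm (tA t) (tB t)) (ta t)) (tb t) = Mid.

Definition conjM (g X : M2) : M2 := Mmul (Mmul g X) (Minv g).

Definition same_class (t u : tuple4) : Prop :=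
  exists g : M2, SU2 g /\
    conjM g (tA t) = tA u /\ conjM g (tB t) = tB u /\
    conjM g (ta t) = ta u /\ conjM g (tb t) = tb u.

Definition A0 (chi : R) : M2 := qmat (cos chi) 0 0 (sin chi). (* e^{i chi sz} *)
Definition a0 (psi : R) : M2 := qmat 0 (cos psi) 0 (sin psi).
Definition cQ (chi psi : R) : M2 := conjM (A0 chi) (a0 psi).
Definition Q (chi psi : R) : tuple4 :=
  let a := a0 psi in let c := cQ chi psi in
  mkT a
      (Mmul (Mmul (Mmul (Minv a) c) a) (A0 chi))
      (Mmul (Mmul (Minv a) c) a)
      (Mmul (Mmul c (Minv a)) (Minv c)).

Definition nu (eps phi : R) : R := eps * sin phi.
Definition hL (eps phi theta : R) : M2 :=
  let v := nu eps phi in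
  Mscale (RtoC (/ sqrt (cos v ^ 2 + sin v ^ 2 * sin theta ^ 2)))
         (qmat 0 (cos v) 0 (- (sin v * sin theta))).
Definition Ls (eps phi theta : R) : tuple4 :=
  let v := nu eps phi in
  let h := hL eps phi theta in
  let a := qmat 0 0 0 1 in
  mkT (Mmul h (qmat (cos phi) (sin phi * cos theta) (sin phi * sin theta) 0))
      (qmat (cos v) (sin v * cos theta) (sin v * sin theta) 0)
      a
      (Mscale (RtoC (-1)) (Mmul (Mmul h (Minv a)) (Minv h))).

(* Main.v *)
From Pilot Require Import Defs.
From Stdlib Require Import Reals Lra.
Open Scope R_scope.
Import Pilot.Defs.

Ltac dM X := destruct X as [[? ?] [? ?] [? ?] [? ?]].
Ltac fe := repeat match goal with |- mkM _ _ _ _ = mkM _ _ _ _ => f_equal | |- mkC _ _ = mkC _ _ => f_equal end.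
Ltac msolve := unfold Mmul, Mtr, Mid, Mscale, Madd, qmat, sx, sy, sz, Mdet, Cadd, Cmul, Cneg, RtoC, C0, C1, Ci; cbn; fe; ring.

Lemma Mmul_assoc A B C' : Mmul A (Mmul B C') = Mmul (Mmul A B) C'.
Proof. dM A; dM B; dM C'; msolve. Qed.
Lemma Mmul_id_l A : Mmul Mid A = A.
Proof. dM A; msolve. Qed.
Lemma Mmul_id_r A : Mmul A Mid = A.
Proof. dM A; msolve. Qed.
Lemma Mtr_comm A B : Mtr (Mmul A B) = Mtr (Mmul B A).
Proof. dM A; dM B; msolve. Qed.
Definition N1 := Mscale (RtoC (-1)) Mid.
Lemma N1_comm A : Mmul A N1 = Mmul N1 A.
Proof. dM A; unfold N1; msolve. Qed.
Lemma Cinv1 : Cinv C1 = C1.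
Proof. unfold Cinv, C1; cbn; f_equal; field. Qed.

Lemma Minv_l g : Mdet g = C1 -> Mmul (Minv g) g = Mid.
Proof. intro H. unfold Minv. rewrite H, Cinv1. dM g.
  unfold Mdet, Cadd, Cmul, Cneg in H; cbn in H. injection H as H1 H2.
  unfold Mmul, Mid, Mscale, Cadd, Cmul, Cneg, C1, C0; cbn; fe; nra. Qed.
Lemma Minv_r g : Mdet g = C1 -> Mmul g (Minv g) = Mid.
Proof. intro H. unfold Minv. rewrite H, Cinv1. dM g.
  unfold Mdet, Cadd, Cmul, Cneg in H; cbn in H. injection H as H1 H2.
  unfold Mmul, Mid, Mscale, Cadd, Cmul, Cneg, C1, C0; cbn; fe; nra. Qed.

Lemma sandwich Qm P X Y : Mmul P Qm = Mid ->
  Mmul (Mmul (Mmul Qm X) P) (Mmul (Mmul Qm Y) P) = Mmul (Mmul Qm (Mmul X Y)) P.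
Proof. intro H.
  rewrite <- !Mmul_assoc. rewrite (Mmul_assoc P Qm), H, Mmul_id_l. reflexivity. Qed.

Lemma sandwichN Qm P : Mmul Qm P = Mid -> Mmul (Mmul Qm N1) P = N1.
Proof. intro H. rewrite N1_comm, <- Mmul_assoc, H, Mmul_id_r. reflexivity. Qed.

Lemma tr_conj g X : Mmul (Minv g) g = Mid -> Mtr (Mmul (Mmul g X) (Minv g)) = Mtr X.
Proof. intro H. rewrite Mtr_comm, Mmul_assoc, H, Mmul_id_l. reflexivity. Qed.

Lemma det_q a b c d : Mdet (qmat a b c d) = RtoC (a^2+b^2+c^2+d^2).
Proof. msolve. Qed.
Lemma tr_q a b c d : Mtr (qmat a b c d) = RtoC (2*a).
Proof. msolve. Qed.
Lemma tr_qq a b c d e f g h :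
  Mtr (Mmul (qmat a b c d) (qmat e f g h)) = RtoC (2*(a*e - b*f - c*g - d*h)).
Proof. msolve. Qed.
Lemma tr_kqq k a b c d e f g h :
  Mtr (Mmul (Mscale (RtoC k) (qmat a b c d)) (qmat e f g h)) = RtoC (2*k*(a*e - b*f - c*g - d*h)).
Proof. msolve. Qed.
Lemma tr_Nq a b c d : Mtr (Mmul N1 (qmat a b c d)) = RtoC (-2*a).
Proof. unfold N1; msolve. Qed.
Lemma qq_neg b d : b^2 + d^2 = 1 -> Mmul (qmat 0 b 0 d) (qmat 0 b 0 d) = N1.
Proof. intro H. unfold N1, Mmul, Mtr, Mid, Mscale, Madd, qmat, sx, sy, sz, Cadd, Cmul, Cneg, RtoC, C0, C1, Ci; cbn; fe; nra. Qed.

Lemma detA0 chi : Mdet (A0 chi) = C1.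
Proof. unfold A0; rewrite det_q. unfold RtoC, C1; f_equal. pose proof (sin2_cos2 chi). unfold Rsqr in *. nra. Qed.
Lemma deta0 psi : Mdet (a0 psi) = C1.
Proof. unfold a0; rewrite det_q. unfold RtoC, C1; f_equal. pose proof (sin2_cos2 psi). unfold Rsqr in *. nra. Qed.

Lemma Qtr chi psi : Mtr (Mmul (ta (Q chi psi)) (tB (Q chi psi))) = RtoC (-2 * cos chi).
Proof.
  cbn [Q ta tB].
  set (a := a0 psi). set (c := cQ chi psi).
  set (t := Mmul (Mmul (Minv a) c) a).
  assert (Hc : Mmul c c = N1).
  { unfold c, cQ, conjM. rewrite sandwich by (apply Minv_l, detA0).
    unfold a, a0. rewrite qq_neg. apply sandwichN, Minv_r, detA0.
    pose proof (sin2_cos2 psi). unfold Rsqr in *. nra. }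
  assert (Ht : Mmul t t = N1).
  { unfold t. rewrite sandwich by (apply Minv_r, deta0). rewrite Hc.
    apply sandwichN, Minv_l, deta0. }
  rewrite Mmul_assoc, Ht. unfold A0. apply tr_Nq.
Qed.

Lemma cos_zero_0PI x : 0 <= x <= PI -> cos x = 0 -> x = PI/2.
Proof. intros H E. apply cos_inj; auto. pose proof PI_RGT_0; lra. rewrite E, cos_PI2; auto. Qed.

Theorem mainTheorem15 :
  exists eps0 : R, 0 < eps0 /\
  forall eps : R, 0 < eps < eps0 ->
  forall chi psi phi theta : R,
    0 <= chi <= PI ->
    - (PI / 2) <= psi <= PI / 2 ->
    0 <= phi <= PI ->
    0 <= theta < 2 * PI ->
    same_class (Q chi psi) (Ls eps phi theta) ->
    chi = PI / 2 /\
    (theta = PI / 2 \/ theta = 3 * PI / 2 \/ phi = 0 \/ phi = PI).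
Proof.
  exists 1. split; [lra|].
  intros eps Heps chi psi phi theta Hchi Hpsi Hphi Hth [g [[_ Hdet] [EA [EB [Ea Eb]]]]].
  pose proof (Minv_l g Hdet) as Hg.
  pose proof PI_RGT_0 as HPI.
  split.
  - assert (E : Mtr (Mmul (ta (Ls eps phi theta)) (tB (Ls eps phi theta))) = RtoC (-2 * cos chi)).
    { rewrite <- Ea, <- EB. unfold conjM. rewrite sandwich by exact Hg.
      rewrite (tr_conj g _ Hg). apply Qtr. }
    cbn [Ls ta tB] in E. rewrite tr_qq in E. apply (f_equal re) in E. cbn in E.
    apply cos_zero_0PI; auto. lra.
  - assert (E : Mtr (tA (Ls eps phi theta)) = RtoC 0).
    { rewrite <- EA. unfold conjM. rewrite (tr_conj g _ Hg). cbn [Q tA]. unfold a0. rewrite tr_q. f_equal; ring. }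
    cbn [Ls tA] in E. unfold hL in E. rewrite tr_kqq in E. apply (f_equal re) in E. cbn in E.
    set (v := nu eps phi) in *.
    assert (Hs : 0 <= sin phi <= 1).
    { split. destruct (Req_dec phi 0) as [->|]; [rewrite sin_0; lra|].
      destruct (Req_dec phi PI) as [->|]; [rewrite sin_PI; lra|].
      left; apply sin_gt_0; lra. apply SIN_bound. }
    assert (Hcv : 0 < cos v).
    { unfold v, nu. apply cos_gt_0; pose proof PI2_1; nra. }
    assert (Hk : 0 < / sqrt (cos v ^ 2 + sin v ^ 2 * sin theta ^ 2)).
    { apply Rinv_0_lt_compat, sqrt_lt_R0. nra. }
    assert (Hp : sin phi * cos theta = 0).
    { set (k := / sqrt _) in *.
      assert (k * cos v * (sin phi * cos theta) = 0) by lra.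
      apply Rmult_integral in H as [H|H]; auto. nra. }
    apply Rmult_integral in Hp as [H|H].
    + right; right.
      destruct (Req_dec phi 0) as [->|]; [left; auto|].
      destruct (Req_dec phi PI) as [->|]; [right; auto|].
      assert (0 < sin phi) by (apply sin_gt_0; lra). lra.
    + destruct (Rle_dec theta PI).
      * left. apply cos_zero_0PI; auto. lra.
      * right; left.
        assert (theta - PI = PI/2).
        { apply cos_zero_0PI. lra. rewrite cos_minus, cos_PI, sin_PI, H. ring. }
        lra.
Qed.
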